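(* For any positive integer $k$, we have $N_k(1) \geq 5k-2$ and $N'_k(1) \geq 4k-2$.
   Context: A tournament is an orientation of a complete graph. For a digraph $D$ and $X \subseteq V(D)$, inverting $X$ means reversing the direction of every arc of $D$ with both endvertices in $X$. A digraph $D$ is $k$-arc-strong if for every partition $(V_1,V_2)$ of $V(D)$ into nonempty sets there are at least $k$ arcs from $V_1$ to $V_2$; it is $k$-strong if $|V(D)|\ge k+1$ and $D-S$ is strongly connected for every $S\subseteq V(D)$ with $|S|<k$. $\mathrm{sinv}'_k(D)$ (resp. $\mathrm{sinv}_k(D)$) is the minimum number of sets whose successive inversion transforms $D$ into a $k$-arc-strong (resp. $k$-strong) digraph. For $n \ge 2k+1$, $m_k(n) = \max\{\mathrm{sinv}_k(T) : T \text{ tournament of order } n\}$ and $m'_k(n) = \max\{\mathrm{sinv}'_k(T) : T \text{ tournament of order } n\}$. For positive integers $k,i$, $N_k(i)$ (resp. $N'_k(i)$) is the smallest integer such that $m_k(n) \leq i$ (resp. $m'_k(n)\le i$) for all $n \geq N_k(i)$ (resp. $n\ge N'_k(i)$). *)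

(* Defs.v *)
From mathcomp Require Import all_boot.
Set Implicit Arguments. Unset Strict Implicit. Unset Printing Implicit Defensive.

Definition tournament (n : nat) (D : rel 'I_n) : Prop :=
  (forall x, ~~ D x x) /\ (forall x y, x != y -> D x y (+) D y x).

Definition invert (n : nat) (D : rel 'I_n) (X : {set 'I_n}) : rel 'I_n :=
  fun x y => if (x \in X) && (y \in X) then D y x else D x y.

Definition invert_seq (n : nat) (D : rel 'I_n) (Xs : seq {set 'I_n}) : rel 'I_n :=
  foldl (@invert n) D Xs.

Definition arc_strong (k n : nat) (D : rel 'I_n) : Prop :=
  forall V1 : {set 'I_n}, V1 != set0 -> V1 != setT ->
    k <= #|[set p : 'I_n * 'I_n | (p.1 \in V1) && (p.2 \notin V1) && D p.1 p.2]|.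

Definition strong_minus (n : nat) (D : rel 'I_n) (S : {set 'I_n}) : Prop :=
  forall x y, x \notin S -> y \notin S ->
    connect (fun u v => [&& D u v, u \notin S & v \notin S]) x y.

Definition kstrong (k n : nat) (D : rel 'I_n) : Prop :=
  k.+1 <= n /\ forall S : {set 'I_n}, #|S| < k -> strong_minus D S.

Definition sinv_le (k n : nat) (D : rel 'I_n) (i : nat) : Prop :=
  exists Xs : seq {set 'I_n}, size Xs <= i /\ kstrong k (invert_seq D Xs).
Definition sinv'_le (k n : nat) (D : rel 'I_n) (i : nat) : Prop :=
  exists Xs : seq {set 'I_n}, size Xs <= i /\ arc_strong k (invert_seq D Xs).

Definition m_le (k n i : nat) : Prop :=
  forall D : rel 'I_n, tournament D -> sinv_le k D i.
Definition m'_le (k n i : nat) : Prop :=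
  forall D : rel 'I_n, tournament D -> sinv'_le k D i.

(* N is an admissible threshold (within the domain n >= 2k+1 of m_k): N_k(i) is the least such N,
   so "N_k(i) >= b" means every admissible threshold is >= b. *)
Definition N_threshold (k i N : nat) : Prop :=
  (2 * k).+1 <= N /\ forall n, N <= n -> m_le k n i.
Definition N'_threshold (k i N : nat) : Prop :=
  (2 * k).+1 <= N /\ forall n, N <= n -> m'_le k n i.

(* Main.v *)
Require Import Defs.
From mathcomp Require Import all_boot.
From mathcomp Require Import zify.
From Stdlib Require Import FunctionalExtensionality.
Set Implicit Arguments. Unset Strict Implicit. Unset Printing Implicit Defensive.
Definition circ (k i j : nat) : bool :=
  ((i < j) && (j - i <= k - 1)) || ((j < i) && (k <= i - j)).
Definition Dn (k m x y : nat) : bool :=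
  let a := 2 * k - 1 in
  if x < a then (if y < a then circ k x y else true)
  else if x < a + m then (if y < a then false else if y < a + m then x < y else true)
  else (if y < a + m then false else circ k (x - (a + m)) (y - (a + m))).

Definition fH k h d := if d.+1 <= h then h - d.+1 else h + (2*k-1) - d.+1.
Definition fL k m l d := let c := 2*k-1+m in let p := l - c in
  c + (if p + d.+1 < 2*k-1 then p + d.+1 else p + d.+1 - (2*k-1)).

Lemma Dn_in k m n u h : 0 < k -> n = 2*(2*k-1)+m -> u < n -> h < 2*k-1 ->
  Dn k m u h -> exists2 d, d < k - 1 & u = fH k h d.
Proof.
move=> k0 nE un hk; rewrite /Dn /circ /fH hk.
case: ifP => ua; last by do !case: ifP => //; lia.
case/orP => [/andP [H1 H2]|/andP [H1 H2]].
- exists (h - u - 1); first lia. case: ifP; lia.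
- exists (h + (2*k-1) - u - 1); first lia. case: ifP; lia.
Qed.

Lemma Dn_out k m n l v : 0 < k -> n = 2*(2*k-1)+m -> v < n -> l < n -> 2*k-1+m <= l ->
  Dn k m l v -> exists2 d, d < k - 1 & v = fL k m l d.
Proof.
move=> k0 nE vn ln lk; rewrite /Dn /circ /fL.
have -> : (l < 2*k-1) = false by lia.
have -> : (l < 2*k-1+m) = false by lia.
case: ifP => va; first by [].
case/orP => [/andP [H1 H2]|/andP [H1 H2]].
- exists (v - l - 1); first lia. case: ifP; lia.
- exists (v + (2*k-1) - l - 1); first lia. case: ifP; lia.
Qed.

Lemma circ_tour k i j a : 0 < k -> a = 2*k-1 -> i < a -> j < a -> i != j -> circ k i j (+) circ k j i.
Proof. move=> k0 -> ia ja ij; rewrite /circ.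
case: (ltngtP i j) ij => // H _; rewrite /= ?andbF ?orbF ?andbT;
case: leqP; case: leqP; lia.
Qed.

Lemma Dn_tour n k m x y : 0 < k -> x < n -> y < n -> n = 2*(2*k-1)+m -> x != y -> Dn k m x y (+) Dn k m y x.
Proof. move=> k0 xn yn nE xy. rewrite /Dn.
do ! case: ifP => //=; intros; try lia; apply: (@circ_tour k _ _ (2*k-1)); lia.
Qed.

Lemma Dn_irr k m x : Dn k m x x = false.
Proof. rewrite /Dn /circ; do ! case: ifP => //; lia. Qed.

Definition Tm k m n : rel 'I_n := fun x y => Dn k m x y.
Arguments Tm : clear implicits.

Lemma Tm_tour k m n : 0 < k -> n = 2*(2*k-1)+m -> tournament (Tm k m n).
Proof.
move=> k0 nE; split => [x|x y xy]; first by rewrite /Tm Dn_irr.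
by apply: (Dn_tour (n := n)).
Qed.

Lemma card_le_img (n p : nat) (S : {set 'I_n}) (g : 'I_p -> 'I_n) :
  S \subset g @: setT -> #|S| <= p.
Proof.
move=> sub; apply: leq_trans (subset_leq_card sub) _.
by apply: leq_trans (leq_imset_card _ _) _; rewrite cardsT card_ord.
Qed.

Lemma connect_inv (T : finType) (e : rel T) (P : pred T) x y :
  (forall u v, e u v -> P u -> P v) -> connect e x y -> P x -> P y.
Proof.
move=> He /connectP [p pth ->] {y}.
elim: p x pth => //= z p IH x /andP [exz pth] Px.
exact: IH pth (He _ _ exz Px).
Qed.

Lemma indeg k m n (X : {set 'I_n}) (h : 'I_n) : 0 < k -> n = 2*(2*k-1)+m -> h < 2*k-1 -> h \notin X ->
  #|[set u | invert (Tm k m n) X u h]| < k.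
Proof.
move=> k0 nE hk hX.
pose g := fun d : 'I_(k-1) => (insubd h (fH k h d) : 'I_n).
apply: (@leq_ltn_trans (k-1)); last lia.
apply: (card_le_img (g := g)); apply/subsetP => u.
rewrite inE /invert (negbTE hX) andbF => Huh.
have [d dk ud] := Dn_in k0 nE (ltn_ord u) hk Huh.
apply/imsetP; exists (Ordinal dk) => //; apply: val_inj.
by rewrite /g val_insubd /= -ud ltn_ord.
Qed.

Lemma outdeg k m n (X : {set 'I_n}) (l : 'I_n) : 0 < k -> n = 2*(2*k-1)+m -> 2*k-1+m <= l -> l \notin X ->
  #|[set v | invert (Tm k m n) X l v]| < k.
Proof.
move=> k0 nE lk lX.
pose g := fun d : 'I_(k-1) => (insubd l (fL k m l d) : 'I_n).
apply: (@leq_ltn_trans (k-1)); last lia.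
apply: (card_le_img (g := g)); apply/subsetP => v.
rewrite inE /invert (negbTE lX) /= => Hlv.
have [d dk vd] := Dn_out k0 nE (ltn_ord v) (ltn_ord l) lk Hlv.
apply/imsetP; exists (Ordinal dk) => //; apply: val_inj.
by rewrite /g val_insubd /= -vd ltn_ord.
Qed.

Lemma not_kstrong k n (X : {set 'I_n}) : 0 < k -> n = 2*(2*k-1)+(k-1) ->
  ~ kstrong k (invert (Tm k (k-1) n) X).
Proof.
move=> k0 nE [_ Hs].
set m := k - 1. set T := Tm k m n.
have n0 : 0 < n by lia.
pose x0 : 'I_n := Ordinal n0.
have nl : n.-1 < n by lia.
pose xl : 'I_n := Ordinal nl.
case: (boolP [exists h : 'I_n, (h < 2*k-1) && (h \notin X)]).
  case/existsP => h /andP [hk hX].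
  set S := [set u | invert T X u h].
  have cS : #|S| < k by apply: indeg.
  have xlS : xl \notin S.
    rewrite inE /invert (negbTE hX) andbF /T /Tm /Dn /=; do !case: ifP => //; lia.
  have hS : h \notin S by rewrite inE /invert (negbTE hX) andbF /T /Tm Dn_irr.
  have := Hs S cS xl h xlS hS.
  move/(connect_inv (P := fun z => z != h)) => /=.
  have -> : xl != h by apply/eqP => /(congr1 val) /=; lia.
  rewrite eqxx; move=> H; suff: false by []; apply: H => // u v /and3P [Huv uS vS] uh; apply/eqP => vh.
  by move: uS; rewrite inE -vh; move/negP; apply.
rewrite negb_exists => /forallP HH.
case: (boolP [exists l : 'I_n, (2*k-1+m <= l) && (l \notin X)]).
  case/existsP => l /andP [lk lX].
  set S := [set v | invert T X l v].
  have cS : #|S| < k by apply: outdeg.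
  have x0S : x0 \notin S.
    rewrite inE /invert (negbTE lX) /= /T /Tm /Dn /=; do !case: ifP => //; lia.
  have lS : l \notin S by rewrite inE /invert (negbTE lX) /T /Tm Dn_irr.
  have := Hs S cS l x0 lS x0S.
  move/(connect_inv (P := fun z => z == l)) => /=.
  have -> : (x0 == l) = false by apply/eqP => /(congr1 val) /=; lia.
  rewrite eqxx; move=> H; suff: false by []; apply: H => // u v /and3P [Huv uS vS] /eqP ul.
  by rewrite inE -ul Huv in vS.
rewrite negb_exists => /forallP HL.
set S := [set u : 'I_n | (2*k-1 <= u < 2*k-1+m) && (u \notin X)].
have cS : #|S| < k.
  pose g := fun d : 'I_m => (insubd x0 (2*k-1+d) : 'I_n).
  apply: (@leq_ltn_trans m); last lia.
  apply: (card_le_img (g := g)); apply/subsetP => u.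
  rewrite inE => /andP [/andP [u1 u2] _].
  have dk : u - (2*k-1) < m by lia.
  apply/imsetP; exists (Ordinal dk) => //; apply: val_inj.
  rewrite /g val_insubd /=.
  have -> : 2 * k - 1 + (u - (2 * k - 1)) = u by lia.
  by rewrite ltn_ord.
have x0S : x0 \notin S by rewrite inE /=; apply/negP => /andP [/andP [? ?] _]; lia.
have xlS : xl \notin S by rewrite inE /=; apply/negP => /andP [/andP [? ?] _]; lia.
have := Hs S cS x0 xl x0S xlS.
move/(connect_inv (P := fun z : 'I_n => z < 2*k-1)) => /=.
have -> : (n.-1 < 2*k-1) = false by lia.
have -> : (0 < 2*k-1) = true by lia.
move=> H; suff: false by []; apply: H => // u v /and3P [Huv _ vS] ua; rewrite ltnNge; apply/negP => va.
have uX : u \in X by move: (HH u); rewrite ua /= negbK.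
have vX : v \in X.
  case: (leqP (2*k-1+m) v) => vm; first by move: (HL v); rewrite vm /= negbK.
  by move: vS; rewrite inE va vm /= negbK.
move: Huv; rewrite /invert uX vX /= /T /Tm /Dn; do !case: ifP => //; lia.
Qed.

Lemma not_arc k n (X : {set 'I_n}) : 0 < k -> n = 2*(2*k-1)+0 ->
  ~ arc_strong k (invert (Tm k 0 n) X).
Proof.
move=> k0 nE Ha.
set T := Tm k 0 n.
have n0 : 0 < n by lia.
pose x0 : 'I_n := Ordinal n0.
have nl : n.-1 < n by lia.
pose xl : 'I_n := Ordinal nl.
case: (boolP [exists h : 'I_n, (h < 2*k-1) && (h \notin X)]).
  case/existsP => h /andP [hk hX].
  set S := [set u | invert T X u h].
  have cS : #|S| < k by apply: indeg.
  have V0 : [set~ h] != set0.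
    by apply/set0Pn; exists xl; rewrite !inE; apply/eqP => /(congr1 val) /=; lia.
  have VT : [set~ h] != setT.
    by apply/eqP => E; have := in_setT h; rewrite -E !inE eqxx.
  have := Ha _ V0 VT.
  set P := [set _ | _].
  have : P \subset (fun u => (u, h)) @: S.
    apply/subsetP => -[u v]; rewrite !inE /= negbK => /andP [/andP [_ /eqP vh] Huv].
    by apply/imsetP; exists u; rewrite ?inE -?vh.
  move/subset_leq_card => H1 H2.
  have := leq_trans H2 (leq_trans H1 (leq_imset_card _ _)); lia.
rewrite negb_exists => /forallP HH.
case: (boolP [exists l : 'I_n, (2*k-1+0 <= l) && (l \notin X)]).
  case/existsP => l /andP [lk lX].
  set S := [set v | invert T X l v].
  have cS : #|S| < k by apply: outdeg.
  have V0 : [set l] != set0 by apply/set0Pn; exists l; rewrite inE.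
  have VT : [set l] != setT.
    apply/eqP => E; have := in_setT x0; rewrite -E !inE => /eqP /(congr1 val) /=; lia.
  have := Ha _ V0 VT.
  set P := [set _ | _].
  have : P \subset (fun v => (l, v)) @: S.
    apply/subsetP => -[u v]; rewrite !inE /= => /andP [/andP [/eqP ul _] Huv].
    by apply/imsetP; exists v; rewrite ?inE -?ul.
  move/subset_leq_card => H1 H2.
  have := leq_trans H2 (leq_trans H1 (leq_imset_card _ _)); lia.
rewrite negb_exists => /forallP HL.
have V0 : [set u : 'I_n | u < 2*k-1] != set0 by apply/set0Pn; exists x0; rewrite inE /=; lia.
have VT : [set u : 'I_n | u < 2*k-1] != setT.
  by apply/eqP => E; have := in_setT xl; rewrite -E !inE /=; lia.
have := Ha _ V0 VT.
set P := [set _ | _].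
have -> : P = set0.
  apply/setP => -[u v]; rewrite !inE /=; apply/negP => /andP [/andP [ua va] Huv].
  have uX : u \in X by move: (HH u); rewrite ua /= negbK.
  have vX : v \in X by move: (HL v); rewrite (_ : 2*k-1+0 <= v) /= ?negbK //; lia.
  by move: Huv; rewrite /invert uX vX /= /T /Tm /Dn; do !case: ifP => //; lia.
by rewrite cards0; lia.
Qed.

Theorem proposition1p13 (k : nat) (hk : 0 < k) :
  (forall N, N_threshold k 1 N -> 5 * k - 2 <= N) /\
  (forall N, N'_threshold k 1 N -> 4 * k - 2 <= N).
Proof.
split => N [N2 HN]; rewrite leqNgt; apply/negP => HNlt.
- pose n := 2*(2*k-1)+(k-1).
  have Nn : N <= n by rewrite /n; lia.
  have nE : n = 2*(2*k-1)+(k-1) by [].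
  have [Xs [sz Hk]] := HN n Nn (Tm k (k-1) n) (Tm_tour hk nE).
  case: Xs sz Hk => [|X [|? ?]] //= _.
  + rewrite /invert_seq /= => Hk.
    have E : Tm k (k-1) n = invert (Tm k (k-1) n) set0.
      by apply: functional_extensionality => x; apply: functional_extensionality => y;
         rewrite /invert inE.
    by rewrite E in Hk; apply: (not_kstrong hk nE Hk).
  + by rewrite /invert_seq /= => Hk; apply: (not_kstrong hk nE Hk).
- pose n := 2*(2*k-1)+0.
  have Nn : N <= n by rewrite /n; lia.
  have nE : n = 2*(2*k-1)+0 by [].
  have [Xs [sz Hk]] := HN n Nn (Tm k 0 n) (Tm_tour hk nE).
  case: Xs sz Hk => [|X [|? ?]] //= _.
  + rewrite /invert_seq /= => Hk.
    have E : Tm k 0 n = invert (Tm k 0 n) set0.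
      by apply: functional_extensionality => x; apply: functional_extensionality => y;
         rewrite /invert inE.
    by rewrite E in Hk; apply: (not_arc hk nE Hk).
  + by rewrite /invert_seq /= => Hk; apply: (not_arc hk nE Hk).
Qed.
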